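(* For every odd integer $n\ge 3$ and every positive divisor $\lambda$ of $n$, there exists a ${}^\lambda\mathrm{H}_{n/\lambda}(n;3)$.
   Context: For positive integers $m,n,s,k,\lambda,t$ with $t$ dividing $\frac{2nk}{\lambda}$, let $v=\frac{2nk}{\lambda}+t$ and $J$ the subgroup of $\mathbb{Z}_v$ of order $t$. A ${}^\lambda\mathrm{H}_t(m,n;s,k)$ is an $m\times n$ partially filled array with entries in $\mathbb{Z}_v$ such that: (a) each row has exactly $s$ and each column exactly $k$ filled cells; (b) the multiset $\{\pm x: x$ an entry of a filled cell$\}$ contains each element of $\mathbb{Z}_v\setminus J$ exactly $\lambda$ times and no element of $J$; (c) every row and every column sums to $0$ in $\mathbb{Z}_v$. When $m=n$ (so $s=k$) it is denoted ${}^\lambda\mathrm{H}_t(n;k)$. *)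

(* Defs.v *)
From mathcomp Require Import all_boot all_order.
Unset Printing Implicit Defensive.

Definition hv (lam t n k : nat) : nat := (2 * n * k) %/ lam + t.

(* An m x n partially filled array with entries in Z_v, represented by
   residues 0 <= x < v ('I_v); None = empty cell.  Arithmetic is mod v. *)
Definition parray (m n v : nat) := 'I_m -> 'I_n -> option 'I_v.

Definition filled {m n v} (A : parray m n v) i j : bool := A i j != None.

Definition entry {m n v} (A : parray m n v) i j : nat :=
  if A i j is Some x then val x else 0.

(* J = the (unique) subgroup of Z_v of order t, i.e. the multiples of v/t *)
Definition inJ (v t y : nat) : bool := (v %/ t) %| y.

(* number of occurrences of y in the multiset {+-x : x an entry} *)
Definition pm_count {m n v} (A : parray m n v) (y : nat) : nat :=
  \sum_(i < m) \sum_(j < n)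
     (if A i j is Some x then ((val x == y %% v) : nat) + (((val x + y) %% v == 0) : nat)
      else 0).

Definition is_heffter (lam t m n s k : nat) (A : parray m n (hv lam t n k)) : Prop :=
  let v := hv lam t n k in
  [/\ lam %| 2 * n * k /\ t %| (2 * n * k) %/ lam,
      (forall i : 'I_m, #|[set j : 'I_n | filled A i j]| = s),
      (forall j : 'I_n, #|[set i : 'I_m | filled A i j]| = k),
      (forall y : nat, y < v ->
         pm_count A y = (if inJ v t y then 0 else lam)) /\
      (forall i : 'I_m, (\sum_(j < n) entry A i j) %% v = 0)
    & (forall j : 'I_n, (\sum_(i < m) entry A i j) %% v = 0)].

Definition is_heffter_sq (lam t n k : nat) (A : parray n n (hv lam t n k)) : Prop :=
  is_heffter lam t n n k k A.

(* Main.v *)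
Require Import Defs.
From mathcomp Require Import all_boot all_order zify.

Lemma mod2 x n : x < n + n -> x %% n = if x < n then x else x - n.
Proof.
move=> h; case: ifP => h1; first by rewrite modn_small.
rewrite -{1}(subnK (_ : n <= x)); last lia.
rewrite modnDr modn_small //; lia.
Qed.

Lemma sum_first3 (G : nat -> nat) n : 3 <= n ->
  \sum_(d < n) (if d < 3 then G d else 0) = G 0 + G 1 + G 2.
Proof.
move=> n3.
rewrite -(big_mkord xpredT (fun d => if d < 3 then G d else 0)) (big_cat_nat (n:=3)) //=.
rewrite [X in _ + X]big1_seq ?addn0; last first.
  by move=> d /andP[_]; rewrite mem_index_iota => /andP[h _]; rewrite ltnNge h.
by rewrite unlock /= addn0 addnA.
Qed.

Lemma sum_col n j (G : nat -> nat) : 3 <= n -> j < n ->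
  \sum_(i < n) (if (j + n - i) %% n < 3 then G ((j + n - i) %% n) else 0) = G 0 + G 1 + G 2.
Proof.
move=> n3 jn.
have n0 : 0 < n by lia.
pose h (i : 'I_n) := Ordinal (ltn_pmod (j + n - i) n0).
have hinj : injective h.
  move=> a b /(congr1 val) /=.
  have := ltn_ord a; have := ltn_ord b.
  rewrite !mod2; try lia.
  move=> ha hb; case: ifP; case: ifP => h1 h2 E; apply/val_inj => /=; lia.
rewrite -(@sum_first3 G n n3).
exact: (esym (reindex_inj (F := fun d : 'I_n => if d < 3 then G d else 0) hinj)).
Qed.

Lemma dg_shift n i d : i < n -> d < n -> ((i + d) %% n + n - i) %% n = d.
Proof.
move=> hi hd.
rewrite (mod2 (i + d)); last lia.
case: ifP => h; rewrite mod2; try lia; case: ifP; lia.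
Qed.

Lemma sum_row n i (F : nat -> nat -> nat) : 3 <= n -> i < n ->
  \sum_(j < n) (if (j + n - i) %% n < 3 then F ((j + n - i) %% n) j else 0)
  = F 0 i + F 1 ((i + 1) %% n) + F 2 ((i + 2) %% n).
Proof.
move=> n3 hi.
have n0 : 0 < n by lia.
pose h (d : 'I_n) := Ordinal (ltn_pmod (i + d) n0).
have hinj : injective h.
  move=> a b /(congr1 val) /=.
  have ha := ltn_ord a; have hb := ltn_ord b.
  rewrite !mod2; try lia.
  case: ifP; case: ifP => h1 h2 E; apply/val_inj => /=; lia.
rewrite (reindex_inj hinj) /=.
rewrite (eq_bigr (fun d : 'I_n => if d < 3 then F d ((i + d) %% n) else 0)); last first.
  by move=> d _; rewrite dg_shift.
by rewrite (@sum_first3 (fun d => F d ((i + d) %% n)) n n3) addn0 (modn_small hi).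
Qed.

Lemma sum_one t w k : 0 < t -> coprime k t ->
  \sum_(j < t) (t %| w + k * j : nat) = 1.
Proof.
move=> t0 ck.
pose h (j : 'I_t) := Ordinal (ltn_pmod (w + k * j) t0).
have key : forall a b : nat, a <= b -> b < t -> k * a == k * b %[mod t] -> a = b.
  move=> a b hab hb; rewrite eq_sym eqn_mod_dvd ?leq_mul2l ?hab ?orbT //.
  rewrite -mulnBr Gauss_dvdr; last by rewrite coprime_sym.
  case E: (b - a) => [|m]; first by lia.
  move/dvdn_leq => /(_ isT); lia.
have hinj : injective h.
  move=> a b /(congr1 val) /= /eqP; rewrite eqn_modDl => E.
  apply/val_inj => /=.
  case: (leqP a b) => hab; first exact: key.
  apply/esym/key; [exact: ltnW | by [] | by rewrite eq_sym].
rewrite (eq_bigr (fun j => (val (h j) == 0) : nat)); last by [].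
rewrite -(reindex_inj (P := xpredT) (F := fun x : 'I_t => (val x == 0) : nat) hinj) /=.
case: t t0 {ck h hinj key} => [//|t'] _.
rewrite big_ord_recl /= big1 // => i _.
Qed.

Lemma count_block t lam w k : 0 < t -> coprime k t ->
  \sum_(j < lam * t) (t %| w + k * j : nat) = lam.
Proof.
move=> t0 ck; elim: lam => [|lam IH]; first by rewrite big_ord0.
rewrite mulSnr big_split_ord /= IH -addn1; congr (_ + _).
rewrite -(@sum_one t w k t0 ck); apply: eq_bigr => j _ /=.
rewrite mulnDr addnCA dvdn_addr //.
by rewrite mulnA dvdn_mull.
Qed.

Lemma count_lin t lam w k : 0 < t -> coprime k t ->
  \sum_(j < lam * t) (7 * t %| w + 7 * k * j : nat) = if 7 %| w then lam else 0.
Proof.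
move=> t0 ck; case: ifP => h7.
  move/dvdnP: h7 => [w' ->].
  rewrite -[RHS](@count_block t lam w' k t0 ck); apply: eq_bigr => j _.
  by rewrite (_ : w' * 7 + 7 * k * j = 7 * (w' + k * j)) ?dvdn_pmul2l //; lia.
rewrite big1 // => j _; apply/eqP; rewrite eqb0; apply/negP => /(dvdn_trans (dvdn_mulr t (dvdnn 7))).
by rewrite dvdn_addl ?h7 // -mulnA dvdn_mulr.
Qed.

Lemma mod3 a b c v : (a %% v + b %% v + c %% v) %% v = (a + b + c) %% v.
Proof. by rewrite modnDmr -addnA modnDml addnCA modnDml addnCA addnA. Qed.

Lemma red t lam n v a k x : v = 7 * t -> n = t * lam ->
  (a + 7 * k * (x %% n)) %% v = (a + 7 * k * x) %% v.
Proof.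
move=> vE nE; rewrite {2}(divn_eq x n) mulnDr addnCA.
rewrite (_ : 7 * k * (x %/ n * n) = (k * (x %/ n) * lam) * v) ?modnMDl //.
move: (x %/ n) => q; rewrite vE nE; lia.
Qed.

Lemma eq_to_dvd X y v : y < v -> (X %% v == y) = (v %| X + (v - y)).
Proof.
move=> yv. rewrite -{1}(modn_small yv) -(eqn_modDr (v - y)) subnKC; last exact: ltnW.
by rewrite modnn.
Qed.

Lemma dvd_mod X y v : ((X %% v + y) %% v == 0) = (v %| X + y).
Proof. by rewrite modnDml. Qed.

Lemma fin_arith t y lam : y < 7 * t ->
 (if 7 %| 1 + (7 * t - y) then lam else 0) + (if 7 %| 1 + y then lam else 0)
 + ((if 7 %| 2 + (7 * t - y) then lam else 0) + (if 7 %| 2 + y then lam else 0))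
 + ((if 7 %| 7 * t - 3 + (7 * t - y) then lam else 0) + (if 7 %| 7 * t - 3 + y then lam else 0))
 = if 7 %| y then 0 else lam.
Proof.
move=> yv.
have yE := divn_eq y 7.
have r7 : y %% 7 < 7 by rewrite ltn_pmod.
move: (y %/ 7) (y %% 7) yE r7 => q r yE r7.
have e : 7 * t - y = (t - q - 1) * 7 + (7 - r) by lia.
have t1 : 7 * t - 3 = (t - 1) * 7 + 4 by lia.
have ha : forall c, (7 %| c + (7 * t - y)) = (7 %| c + (7 - r)).
  by move=> c; rewrite e addnCA (dvdn_addr _ (dvdn_mull _ (dvdnn 7))).
have hb : forall c, (7 %| c + y) = (7 %| c + r).
  by move=> c; rewrite yE addnCA (dvdn_addr _ (dvdn_mull _ (dvdnn 7))).
rewrite t1 -!addnA !(dvdn_addr _ (dvdn_mull _ (dvdnn 7))) !ha !hb.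
rewrite yE (dvdn_addr _ (dvdn_mull _ (dvdnn 7))).
by case: r r7 {yE e ha hb} => [|[|[|[|[|[|[|r]]]]]]] //= _; rewrite ?addn0 ?add0n.
Qed.

Definition cd v d := if d == 0 then 1 else if d == 1 then 2 else v - 3.
Definition kd t d := if d == 1 then 2 * t - 2 else 1.
Definition vexp v t d j := cd v d + 7 * kd t d * j.
Definition mkA n v t (vpos : 0 < v) : parray n n v := fun i j =>
  if (j + n - i) %% n < 3 then
    Some (Ordinal (ltn_pmod (vexp v t ((j + n - i) %% n) j) vpos))
  else None.

Lemma count_lin' n t lam w k : n = lam * t -> 0 < t -> coprime k t ->
  \sum_(j < n) (7 * t %| w + 7 * k * j : nat) = if 7 %| w then lam else 0.
Proof. by move=> -> ; apply: count_lin. Qed.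

Theorem proposition4 (n lam : nat) :
  odd n -> 3 <= n -> 0 < lam -> lam %| n ->
  exists A : parray n n (hv lam (n %/ lam) n 3),
    is_heffter_sq lam (n %/ lam) n 3 A.
Proof.
move=> on n3 l0 ln.
have nE : n = n %/ lam * lam by rewrite divnK.
set t := n %/ lam in nE *.
have t0 : 0 < t by move: nE; case: (t) => //=; lia.
have ot : odd t by move: on; rewrite nE oddM => /andP[].
have e6 : (2 * n * 3) %/ lam = 6 * t.
  by rewrite (_ : 2 * n * 3 = 6 * t * lam) ?mulnK //; rewrite nE; lia.
set v := hv lam t n 3.
have vE : v = 7 * t by rewrite /v /hv e6; lia.
have vpos : 0 < v by rewrite vE; lia.
exists (@mkA n v t vpos).
have n0 : 0 < n by lia.
have fillE : forall (i j : 'I_n), filled (@mkA n v t vpos) i j = ((j + n - i) %% n < 3).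
  by move=> i j; rewrite /filled /mkA; case: ifP.
have entE : forall (i j : 'I_n), entry (@mkA n v t vpos) i j =
   if (j + n - i) %% n < 3 then vexp v t ((j + n - i) %% n) j %% v else 0.
  by move=> i j; rewrite /entry /mkA; case: ifP.
have cardE : forall (P : pred 'I_n), #|[set j | P j]| = \sum_j (P j : nat).
  by move=> P; rewrite -sum1_card big_mkcond /=; apply: eq_bigr => j _; rewrite inE; case: (P j).
rewrite /is_heffter_sq /is_heffter; split.
- split; first by apply/dvdnP; exists (2 * t * 3); rewrite {1}nE; lia.
  by rewrite e6 dvdn_mull.
- move=> i; rewrite cardE.
  apply: etrans _ (@sum_row n i (fun _ _ => 1) n3 (ltn_ord i)).
  by apply: eq_bigr => j _; rewrite fillE; case: ifP.
- move=> j; rewrite cardE.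
  apply: etrans _ (@sum_col n j (fun _ => 1) n3 (ltn_ord j)).
  by apply: eq_bigr => i _; rewrite fillE; case: ifP.
- have ck : forall d, coprime (kd t d) t.
    move=> d; rewrite /kd; case: ifP => _; last exact: coprime1n.
    rewrite (_ : 2 * t - 2 = 2 * (t - 1)); last lia.
    rewrite coprimeMl coprime2n ot /=.
    by case: (t) t0 => // t' _; rewrite subn1 /=; apply: coprimenS.
  have nE' : n = lam * t by rewrite nE mulnC.
  split.
  + move=> y yv; rewrite /pm_count exchange_big /=.
    have inJE : inJ v t y = (7 %| y) by rewrite /inJ vE mulnK.
    rewrite inJE.
    pose H d (j : nat) := ((vexp v t d j %% v == y %% v) : nat) + (((vexp v t d j %% v + y) %% v == 0) : nat).
    rewrite (eq_bigr (fun j : 'I_n => H 0 j + H 1 j + H 2 j)); last first.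
      move=> j _; apply: etrans _ (@sum_col n j (fun d => H d j) n3 (ltn_ord j)).
      by apply: eq_bigr => i _; rewrite /mkA; case: ifP.
    have cnt : forall d, \sum_(j < n) H d j = (if 7 %| cd v d + (v - y) then lam else 0)
                                      + (if 7 %| cd v d + y then lam else 0).
      move=> d; rewrite big_split /=; congr (_ + _).
        rewrite -[RHS](@count_lin' n t lam (cd v d + (v - y)) (kd t d) nE' t0 (ck d)).
        by apply: eq_bigr => j _; rewrite (modn_small yv) eq_to_dvd // /vexp addnAC -vE.
      rewrite -[RHS](@count_lin' n t lam (cd v d + y) (kd t d) nE' t0 (ck d)).
      by apply: eq_bigr => j _; rewrite dvd_mod /vexp addnAC -vE.
    rewrite (_ : \sum_(j < n) (H 0 j + H 1 j + H 2 j) = \sum_(j < n) H 0 j + \sum_(j < n) H 1 j + \sum_(j < n) H 2 j); last by rewrite !big_split.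
    rewrite !cnt /cd /=.
    have yv2 : y < 7 * t by rewrite -vE. rewrite vE. exact: (@fin_arith t y lam yv2).
  + move=> i; rewrite (eq_bigr _ (fun j _ => entE i j)).
    have := @sum_row n i (fun d j => vexp v t d j %% v) n3 (ltn_ord i); rewrite /= => ->.
    rewrite /vexp /cd /kd /= !(@red t lam n v _ _ _ vE nE) mod3 vE.
    apply/eqP/dvdnP; exists (2 * i + 3); nia.
- move=> j; rewrite (eq_bigr _ (fun i _ => entE i j)).
  have := @sum_col n j (fun d => vexp v t d j %% v) n3 (ltn_ord j); rewrite /= => ->.
  rewrite /vexp /cd /kd /= mod3 vE.
  apply/eqP/dvdnP; exists (2 * j + 1); nia.
Qed.
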